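(* Let $P_F$ denote the joint distribution, in a population of healthcare-seeking individuals, of the random variables $(A, Y, W, D, S, \Delta, X)$, where $A\in\{0,1\}$ is a binary exposure (vaccination status or dichotomized immune marker level at the time of potential SARS-CoV-2 exposure), $Y\in\{0,1\}$ indicates SARS-CoV-2 infection, $W\in\{0,1\}$ indicates a cause other than SARS-CoV-2 that could induce symptoms, $D\in\{0,1\}$ indicates meeting the symptom definition, $S\in\{0,1\}$ indicates obtaining SARS-CoV-2 testing (and hence enrollment in the test-negative design (TND) study when $D=1$), $\Delta\in\{0,1\}$ indicates that the exposure is observed, and $X\in\mathbb{R}^r$ are covariates. Let $P$ denote the distribution of the data as recorded in the TND study (exposure status recorded at testing and SARS-CoV-2 test result), and define $$\mu_P(y,x) := P(A=1\mid D=1,S=1,\Delta=1,Y=y,X=x),\qquad OR(P)(x):=\frac{\mu_P(1,x)/(1-\mu_P(1,x))}{\mu_P(0,x)/(1-\mu_P(0,x))}.$$ Assume: (1) $P\big(P(Y=1,D=1\mid S=1,X)>0\big)=1$ and $P\big(P(Y=0,D=1\mid S=1,X)>0\big)=1$; (2) $P\big(P(\Delta=1\mid D=1,S=1,Y,X)>0\big)=1$; (3) $P_F\big(P_F(S=1\mid D=1,Y,X)>0\big)=1$; (4) $S\perp\!\!\!\perp A\mid D=1,Y,X$; (5) $\Delta\perp\!\!\!\perp A\mid D=1,S=1,Y,X$; (6) (noncase exchangeability) $P_F(Y=0,D=1\mid A=1,X)=P_F(Y=0,D=1\mid A=0,X)$; (7) the exposure status recorded at SARS-CoV-2 testing accurately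 reflects the exposure status $A$ at the time of potential SARS-CoV-2 exposure in TND participants; (8) the SARS-CoV-2 test result accurately measures the infection status $Y$ in TND participants. Then $$OR(P)(x)=RR(P_F)(x):=\frac{P_F(Y=1,D=1\mid A=1,X=x)}{P_F(Y=1,D=1\mid A=0,X=x)}.$$
   Context: Test-negative design: individuals are enrolled if they meet the symptom definition ($D=1$) and obtain SARS-CoV-2 testing ($S=1$); cases test positive ($Y=1$) and noncases test negative ($Y=0$). The exposure $A$ is observed only for participants with $\Delta=1$ (missing either unintentionally or by a two-phase sampling design). $P_F$ is the full-data distribution over the healthcare-seeking population; $P$ is the distribution of the observed TND data. *)

(* Defs.v *)
From HB Require Import structures.
From mathcomp Require Import all_boot all_order all_algebra.
From mathcomp Require Import reals.
Set Implicit Arguments. Unset Strict Implicit. Unset Printing Implicit Defensive.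
Import Order.TTheory GRing.Theory Num.Theory.
Local Open Scope ring_scope.

(* Outcome of the binary variables of one individual:
   (A, Y, W, D, S, Delta, Aobs, Yobs) where
   A    = true exposure at time of potential exposure,
   Y    = true SARS-CoV-2 infection status,
   W    = other cause inducing symptoms,
   D    = meets symptom definition,
   S    = obtains SARS-CoV-2 testing,
   Delta= exposure is observed,
   Aobs = exposure status as recorded at testing,
   Yobs = SARS-CoV-2 test result. *)
Definition omega : finType :=
  (bool * bool * bool * bool * bool * bool * bool * bool)%type.

Definition vA     (w : omega) : bool := w.1.1.1.1.1.1.1.
Definition vY     (w : omega) : bool := w.1.1.1.1.1.1.2.
Definition vW     (w : omega) : bool := w.1.1.1.1.1.2.
Definition vD     (w : omega) : bool := w.1.1.1.1.2.
Definition vS     (w : omega) : bool := w.1.1.1.2.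
Definition vDelta (w : omega) : bool := w.1.1.2.
Definition vAobs  (w : omega) : bool := w.1.2.
Definition vYobs  (w : omega) : bool := w.2.

Section Prob.
Variable R : realType.

Definition is_pmf (p : omega -> R) : Prop :=
  (forall w, 0 <= p w) /\ \sum_(w : omega) p w = 1.

Definition Pr (p : omega -> R) (E : pred omega) : R :=
  \sum_(w : omega | E w) p w.

(* conditional probability P(E | F) = P(E and F) / P(F)
   (MathComp convention: division by 0 yields 0) *)
Definition CPr (p : omega -> R) (E F : pred omega) : R :=
  Pr p [pred w | E w && F w] / Pr p F.

(* conditional independence of binary variables U and V given event F,
   in product-rule form (no division needed):
   P(U=u,V=v,F) P(F) = P(U=u,F) P(V=v,F) for all u v. *)
Definition cond_indep (p : omega -> R) (U V : omega -> bool) (F : pred omega)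
  : Prop :=
  forall u v : bool,
    Pr p [pred w | (U w == u) && (V w == v) && F w] * Pr p F =
    Pr p [pred w | (U w == u) && F w] * Pr p [pred w | (V w == v) && F w].

(* mu_P(y, x): P(A=1 | D=1, S=1, Delta=1, Y=y, X=x) computed in the observed
   TND data, i.e. with the recorded exposure and the test result; pX is the
   conditional law of the full data given X = x. *)
Definition muP (pX : omega -> R) (y : bool) : R :=
  CPr pX (fun w => vAobs w)
     (fun w => [&& vD w, vS w, vDelta w & vYobs w == y]).

Definition odds (m : R) : R := m / (1 - m).

Definition ORP (pX : omega -> R) : R := odds (muP pX true) / odds (muP pX false).

Definition RRPF (pX : omega -> R) : R :=
  CPr pX (fun w => vY w && vD w) (fun w => vA w) /
  CPr pX (fun w => vY w && vD w) (fun w => ~~ vA w).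

End Prob.

(* Main.v *)
Require Import Defs.
From HB Require Import structures.
From mathcomp Require Import all_boot all_order all_algebra.
From mathcomp Require Import reals ring lra.
Import Order.TTheory GRing.Theory Num.Theory.
Local Open Scope ring_scope.
Section H.
Variable R : realType.
Variable p : omega -> R.
Hypothesis p0 : forall w, 0 <= p w.

Lemma Pr_ge0 (E : pred omega) : 0 <= Pr p E.
Proof. by apply: sumr_ge0 => w _. Qed.

Lemma Pr_ext (E F : pred omega) : (forall w, E w = F w) -> Pr p E = Pr p F.
Proof. by move=> h; apply: eq_bigl. Qed.

Lemma Pr_le (E F : pred omega) : (forall w, E w -> F w) -> Pr p E <= Pr p F.
Proof.
move=> h; rewrite /Pr [X in _ <= X](bigID E) /=.
have -> : \sum_(i | F i && E i) p i = \sum_(i | E i) p i.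
  by apply: eq_bigl => w; case Ew: (E w); rewrite ?andbT ?andbF ?(h _ Ew).
by rewrite lerDl; apply: sumr_ge0.
Qed.

Lemma Pr_split (E B : pred omega) :
  Pr p E = Pr p (fun w => E w && B w) + Pr p (fun w => E w && ~~ B w).
Proof. by rewrite /Pr (bigID B). Qed.

Lemma null_pt (Z : pred omega) w : Pr p Z = 0 -> Z w -> p w = 0.
Proof. by move=> h Zw; apply: (psumr_eq0P _ h) => // i _. Qed.

Lemma Pr_null_ext (E F : pred omega) :
  (forall w, p w != 0 -> E w = F w) -> Pr p E = Pr p F.
Proof.
move=> h; rewrite /Pr (big_mkcond E) (big_mkcond F); apply: eq_bigr => w _.
case: (eqVneq (p w) 0) => [->|nz]; first by rewrite !if_same.
by rewrite h.
Qed.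

Lemma Pr_pos_CPr (E F : pred omega) : 0 < CPr p E F -> 0 < Pr p (fun w => E w && F w).
Proof.
move=> h; rewrite lt0r Pr_ge0 andbT.
apply: contraTneq h => h0.
rewrite /CPr.
have -> : Pr p [pred w | E w && F w] = 0 by rewrite -h0; apply: Pr_ext.
by rewrite mul0r ltxx.
Qed.
End H.
Lemma odds_frac (R : realType) (a b : R) : a + b != 0 -> odds (a / (a + b)) = a / b.
Proof.
move=> nz; rewrite /odds.
have -> : 1 - a / (a + b) = b / (a + b).
  by apply: (mulIf nz); rewrite mulrBl !mulfVK // mul1r addrAC subrr add0r.
by rewrite invfM invrK mulrACA mulVf // mulr1.
Qed.

Lemma cancel_k (R : realType) (k a b : R) : k != 0 -> (k * a) / (k * b) = a / b.
Proof. by move=> nz; rewrite invfM mulrACA divff // mul1r. Qed.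

Lemma main (R : realType) (p : omega -> R)
  (Hpmf : is_pmf p)
  (H1 : forall y : bool,
      0 < CPr p (fun w => (vYobs w == y) && vD w) (fun w => vS w))
  (H2 : forall y : bool,
      0 < CPr p (fun w => vDelta w)
                     (fun w => [&& vD w, vS w & vYobs w == y]))
  (H4 : forall y : bool,
      cond_indep p vS vA (fun w => vD w && (vY w == y)))
  (H5 : forall y : bool,
      cond_indep p vDelta vA (fun w => [&& vD w, vS w & vY w == y]))
  (H6 : CPr p (fun w => ~~ vY w && vD w) (fun w => vA w) =
        CPr p (fun w => ~~ vY w && vD w) (fun w => ~~ vA w))
  (H7 : Pr p (fun w => [&& vD w, vS w & vAobs w != vA w]) = 0)
  (H8 : Pr p (fun w => [&& vD w, vS w & vYobs w != vY w]) = 0) :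
  ORP p = RRPF p.
Proof.
case: Hpmf => p0 p1.
have hN : forall w, p w != 0 -> (vD w && vS w) ==> (vAobs w == vA w) && (vYobs w == vY w).
  move=> w nz; apply/implyP => /andP [Dw Sw]; apply/andP; split.
    apply: contraNT nz => ne; apply/eqP; apply: (@null_pt R p p0 _ w H7); by rewrite /= Dw Sw ne.
  apply: contraNT nz => ne; apply/eqP; apply: (@null_pt R p p0 _ w H8); by rewrite /= Dw Sw ne.
pose g y := Pr p (fun w => vD w && (vY w == y)).
pose f y := Pr p (fun w => [&& vD w, vS w & vY w == y]).
pose m a y := Pr p (fun w => (vA w == a) && (vD w && (vY w == y))).
pose fa a y := Pr p (fun w => (vA w == a) && [&& vD w, vS w & vY w == y]).
pose n a y := Pr p (fun w => (vDelta w == true) && (vA w == a) && [&& vD w, vS w & vY w == y]).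
pose dD y := Pr p (fun w => (vDelta w == true) && [&& vD w, vS w & vY w == y]).
have K1 : forall a y, fa a y * g y = f y * m a y.
  move=> a y; have := H4 y true a; rewrite /cond_indep.
  have -> : Pr p [pred w | (vS w == true) && (vA w == a) && (vD w && (vY w == y))] = fa a y.
    apply: Pr_ext => w /=; by case: (vS w); case: (vD w); rewrite ?andbF ?andbT.
  have -> : Pr p [pred w | (vS w == true) && (vD w && (vY w == y))] = f y.
    apply: Pr_ext => w /=; by case: (vS w); case: (vD w); rewrite ?andbF ?andbT.
  done.
have K2 : forall a y, n a y * f y = dD y * fa a y.
  move=> a y; exact: (H5 y true a).
have Obs : forall y, muP p y = n true y / dD y.
  move=> y; rewrite /muP /CPr; congr (_ / _); apply: Pr_null_ext => w nz /=;
  move: (hN w nz); case: (vD w); case: (vS w); case: (vA w); case: (vAobs w);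
  case: (vY w); case: (vYobs w); case: (vDelta w); by case: y.
have Sp1 : forall y, dD y = n true y + n false y.
  move=> y; rewrite /dD (@Pr_split R p _ vA); congr (_ + _); apply: Pr_ext => w /=;
  by case: (vA w); case: (vDelta w); rewrite ?andbF ?andbT.
have Sp2 : forall y, g y = m true y + m false y.
  move=> y; rewrite /g (@Pr_split R p _ vA); congr (_ + _); apply: Pr_ext => w /=;
  by case: (vA w); rewrite ?andbF ?andbT.
have PA : Pr p vA + Pr p (fun w => ~~ vA w) = 1.
  have e1 : Pr p (fun _ => true) = 1 by exact: p1.
  by rewrite -e1 (@Pr_split R p (fun _ => true) vA).
have fpos : forall y, 0 < f y.
  move=> y; have h := @Pr_pos_CPr R p p0 _ _ (H1 y); rewrite /f.
  apply: (lt_le_trans h); rewrite le_eqVlt; apply/orP; left; apply/eqP; clear h.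
  apply: Pr_null_ext => w nz /=;
  move: (hN w nz); case: (vD w); case: (vS w); case: (vA w); case: (vAobs w);
  case: (vY w); case: (vYobs w); case: (vDelta w); by case: y.
have dpos : forall y, 0 < dD y.
  move=> y; have h := @Pr_pos_CPr R p p0 _ _ (H2 y); rewrite /dD.
  apply: (lt_le_trans h); rewrite le_eqVlt; apply/orP; left; apply/eqP; clear h.
  apply: Pr_null_ext => w nz /=;
  move: (hN w nz); case: (vD w); case: (vS w); case: (vA w); case: (vAobs w);
  case: (vY w); case: (vYobs w); case: (vDelta w); by case: y.
have gpos : forall y, 0 < g y.
  move=> y; apply: (lt_le_trans (fpos y)); apply: (@Pr_le R p p0) => w /=.
  by case: (vD w); case: (vS w).
have nk : forall a y, n a y = (dD y / g y) * m a y.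
  move=> a y.
  have fnz : f y != 0 by rewrite gt_eqF.
  have gnz : g y != 0 by rewrite gt_eqF.
  apply: (mulIf fnz); apply: (mulIf gnz); rewrite K2 -[dD y * fa a y * g y]mulrA K1.
  by field.
have kz : forall y, dD y / g y != 0.
  by move=> y; rewrite mulf_neq0 ?invr_eq0 ?gt_eqF.
have ORPe : ORP p = (m true true / m false true) / (m true false / m false false).
  rewrite /ORP !Obs !Sp1 !odds_frac -?Sp1 ?gt_eqF //.
  by rewrite !nk !cancel_k.
have e11 : Pr p [pred w | (vY w && vD w) && vA w] = m true true.
  by apply: Pr_ext => w /=; case: (vA w); case: (vY w); case: (vD w).
have e01 : Pr p [pred w | (vY w && vD w) && ~~ vA w] = m false true.
  by apply: Pr_ext => w /=; case: (vA w); case: (vY w); case: (vD w).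
have e10 : Pr p [pred w | (~~ vY w && vD w) && vA w] = m true false.
  by apply: Pr_ext => w /=; case: (vA w); case: (vY w); case: (vD w).
have e00 : Pr p [pred w | (~~ vY w && vD w) && ~~ vA w] = m false false.
  by apply: Pr_ext => w /=; case: (vA w); case: (vY w); case: (vD w).
rewrite /CPr e10 e00 in H6.
rewrite ORPe /RRPF /CPr e11 e01.
set PA1 := Pr p [eta vA] in H6 *.
set PA0 := Pr p (fun w => ~~ vA w) in H6 *.
have PA' : PA1 + PA0 = 1 by exact: PA.
have m0 : forall a y, 0 <= m a y by move=> a y; apply: Pr_ge0.
have PA1ge : 0 <= PA1 by apply: Pr_ge0.
have PA0ge : 0 <= PA0 by apply: Pr_ge0.
have m10le : m true false <= PA1.
  by apply: (@Pr_le R p p0) => w /=; case/andP => /eqP ->.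
have m00le : m false false <= PA0.
  by apply: (@Pr_le R p p0) => w /=; case/andP => /eqP ->.
have g0 := gpos false; rewrite Sp2 in g0.
have PA1nz : PA1 != 0.
  apply/negP => /eqP z.
  have z10 : m true false = 0 by apply/le_anti; rewrite m0 andbT -z.
  have z0 : PA0 = 1 by rewrite -PA' z add0r.
  rewrite z z0 invr0 mulr0 divr1 in H6.
  by move: g0; rewrite z10 -H6 addr0 ltxx.
have PA0nz : PA0 != 0.
  apply/negP => /eqP z.
  have z00 : m false false = 0 by apply/le_anti; rewrite m0 andbT -z.
  have z1 : PA1 = 1 by rewrite -PA' z addr0.
  rewrite z z1 invr0 mulr0 divr1 in H6.
  by move: g0; rewrite z00 H6 addr0 ltxx.
have m10nz : m true false != 0.
  apply/negP => /eqP z; move: H6; rewrite z mul0r => /esym /eqP.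
  rewrite mulf_eq0 invr_eq0 (negbTE PA0nz) orbF => /eqP z'.
  by move: g0; rewrite z z' addr0 ltxx.
have m00nz : m false false != 0.
  apply/negP => /eqP z; move: H6; rewrite z mul0r => /eqP.
  rewrite mulf_eq0 invr_eq0 (negbTE PA1nz) orbF => /eqP z'.
  by move: g0; rewrite z z' addr0 ltxx.
have H6' : m true false / m false false = PA1 / PA0.
  apply/eqP; rewrite eqr_div //; apply/eqP.
  by move/eqP: H6; rewrite eqr_div // => /eqP ->; rewrite mulrC.
rewrite H6' !invfM !invrK.
ring.
Qed.

Theorem theorem1 (R : realType) (r : nat) (PF : 'rV[R]_r -> omega -> R)
  (x : 'rV[R]_r)
  (Hpmf : is_pmf (PF x))
  (* (1) positivity of cases and noncases among the tested (observed data) *)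
  (H1 : forall y : bool,
      0 < CPr (PF x) (fun w => (vYobs w == y) && vD w) (fun w => vS w))
  (* (2) positivity of exposure observation *)
  (H2 : forall y : bool,
      0 < CPr (PF x) (fun w => vDelta w)
                     (fun w => [&& vD w, vS w & vYobs w == y]))
  (* (3) positivity of testing in the full-data population *)
  (H3 : forall y : bool,
      0 < Pr (PF x) (fun w => vD w && (vY w == y)) ->
      0 < CPr (PF x) (fun w => vS w) (fun w => vD w && (vY w == y)))
  (* (4) S _||_ A | D=1, Y, X *)
  (H4 : forall y : bool,
      cond_indep (PF x) vS vA (fun w => vD w && (vY w == y)))
  (* (5) Delta _||_ A | D=1, S=1, Y, X *)
  (H5 : forall y : bool,
      cond_indep (PF x) vDelta vA (fun w => [&& vD w, vS w & vY w == y]))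
  (* (6) noncase exchangeability *)
  (H6 : CPr (PF x) (fun w => ~~ vY w && vD w) (fun w => vA w) =
        CPr (PF x) (fun w => ~~ vY w && vD w) (fun w => ~~ vA w))
  (* (7) recorded exposure equals true exposure in TND participants *)
  (H7 : Pr (PF x) (fun w => [&& vD w, vS w & vAobs w != vA w]) = 0)
  (* (8) test result equals true infection status in TND participants *)
  (H8 : Pr (PF x) (fun w => [&& vD w, vS w & vYobs w != vY w]) = 0) :
  ORP (PF x) = RRPF (PF x).
Proof. exact: main. Qed.
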